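(* Let $n\ge1$ and let $\tau>0$ be real. For an integer $T\ge1$, let $N(T)$ be the number of integer vectors $w\in\{0,1,\dots,T-1\}^n$ such that $e(w/T)\le T^{\frac{1-\tau}{n+1}}$. Then $N(T)/T^n\to 0$ as $T\to\infty$.
   Context: For $\omega\in\mathbb{R}^n$, $R(\omega)=\{k\in\mathbb{Z}^n:\langle k,\omega\rangle\in\mathbb{Z}\}$, $|k|=\max_i|k_i|$, and $e(\omega)=\min_{k\in R(\omega)\setminus\{0\}}|k|$ (for $\omega=w/T$ with $w\in\mathbb{Z}^n$, $R(\omega)$ contains $T\mathbb{Z}^n$, so this minimum exists). *)

(* Defs.v *)
From HB Require Import structures.
From mathcomp Require Import all_boot all_order all_algebra.
From mathcomp Require Import all_classical all_reals all_analysis.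
Set Implicit Arguments. Unset Strict Implicit. Unset Printing Implicit Defensive.
Import Order.TTheory GRing.Theory Num.Theory.
Local Open Scope classical_set_scope.
Local Open Scope ring_scope.

Definition supnorm (n : nat) (k : 'rV[int]_n) : nat := (\max_(i < n) `|k ord0 i|)%N.

Definition dotZ (R : realType) (n : nat) (k : 'rV[int]_n) (om : 'rV[R]_n) : R :=
  \sum_(i < n) (k ord0 i)%:~R * om ord0 i.

Definition Rset (R : realType) (n : nat) (om : 'rV[R]_n) : set 'rV[int]_n :=
  [set k | dotZ k om \is a Num.int].

(* e(omega) = min_{k in R(omega) \ {0}} |k|, written as the infimum of the
   (nonempty, for rational omega) set of values |k|; the infimum of a nonempty
   set of naturals is attained, so it is the minimum. *)
Definition e (R : realType) (n : nat) (om : 'rV[R]_n) : R :=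
  inf [set ((supnorm k)%:R : R) | k in [set k | Rset om k /\ k <> 0]].

Definition omega (R : realType) (n T : nat) (w : {ffun 'I_n -> 'I_T}) : 'rV[R]_n :=
  \row_i (((w i : nat)%:R : R) / T%:R).

Definition Ncount (R : realType) (n : nat) (tau : R) (T : nat) : nat :=
  #|[set w : {ffun 'I_n -> 'I_T} |
      `[< e (omega R w) <= (T%:R : R) `^ ((1 - tau) / (n.+1)%:R) >]]|.

(* Main.v *)
Require Import Defs.
From HB Require Import structures.
From mathcomp Require Import all_boot all_order all_algebra.
From mathcomp Require Import all_classical all_reals all_analysis.
From mathcomp Require Import zify ring lra.
Import Order.TTheory GRing.Theory Num.Theory.
Local Open Scope classical_set_scope.
Local Open Scope ring_scope.
Set Implicit Arguments. Unset Strict Implicit.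

Section Comb.
Variables (m M T : nat).
Hypothesis T0 : (0 < T)%N.

Definition kint (kk : {ffun 'I_m.+1 -> 'I_(2*M).+1}) (i : 'I_m.+1) : int :=
  (kk i : nat)%:Z - M%:Z.
Definition dotI kk (w : {ffun 'I_m.+1 -> 'I_T}) : int :=
  \sum_i kint kk i * (w i : nat)%:Z.
Definition goodk w kk : bool := [exists i, kint kk i != 0] && (T%:Z %| dotI kk w)%Z.
Definition Bad := [set w | [exists kk, goodk w kk]].

Lemma kint_le kk i : `|kint kk i| <= M%:Z.
Proof. rewrite /kint; have := ltn_ord (kk i); move: (nat_of_ord (kk i)) => a ha. lia. Qed.

Lemma dotI_le kk w : `|dotI kk w| <= (m.+1 * M * T)%:Z.
Proof.
rewrite /dotI; apply: le_trans (ler_norm_sum _ _ _) _.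
have -> : ((m.+1 * M * T)%:Z) = \sum_(i < m.+1) (M * T)%:Z.
  by rewrite sumr_const card_ord -[in RHS]natz -mulrnA natz; congr Posz; lia.
apply: ler_sum => i _; rewrite normrM PoszM; apply: ler_pM => //.
  exact: kint_le.
have := ltn_ord (w i); lia.
Qed.

Lemma qb kk w : (T%:Z %| dotI kk w)%Z -> `|(dotI kk w %/ T)%Z| <= (m.+1*M)%:Z.
Proof.
move=> H; have := dotI_le kk w; rewrite -{1}(divzK H) normrM (_ : `|T%:Z| = T%:Z) // !PoszM => h.
by rewrite -(ler_pM2r (_ : 0 < T%:Z)) // ltz_nat.
Qed.

Definition k0 : {ffun 'I_m.+1 -> 'I_(2*M).+1} := [ffun=> ord0].

Definition phi (w : {ffun 'I_m.+1 -> 'I_T}) :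
  {ffun 'I_m.+1 -> 'I_(2*M).+1} * {ffun 'I_m -> 'I_T} * 'I_(2*(m.+1*M)).+1 :=
  let kk := odflt k0 [pick kk | goodk w kk] in
  let i := odflt ord0 [pick i | kint kk i != 0] in
  (kk, [ffun j => w (lift i j)],
   inord (absz ((dotI kk w %/ T)%Z + (m.+1*M)%:Z))).

Lemma phi_inj : {in Bad &, injective phi}.
Proof.
move=> w1 w2; rewrite !inE => /existsP[k1 g1] /existsP[k2 g2].
have [kk1 e1 gk1] : exists2 kk, [pick kk | goodk w1 kk] = Some kk & goodk w1 kk.
  by case: pickP => [kk gk|/(_ k1)]; [exists kk | rewrite g1].
have [kk2 e2 gk2] : exists2 kk, [pick kk | goodk w2 kk] = Some kk & goodk w2 kk.
  by case: pickP => [kk gk|/(_ k2)]; [exists kk | rewrite g2].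
rewrite /phi e1 e2.
move=> [ek]; subst kk2 => /=.
case: pickP => [i ki|H]; last first.
  by move: gk1 => /andP[/existsP[j]]; rewrite H.
move=> ef eq.
move: gk1 gk2 => /andP[_ d1] /andP[_ d2].
have hq1 := qb d1; have hq2 := qb d2.
have eq' := congr1 val eq; rewrite /= !inordK in eq'; last 2 first.
- apply: (@leq_ltn_trans (2*(m.+1*M))); last by [].
  move: hq2; set q := (_ %/ _)%Z; lia.
- apply: (@leq_ltn_trans (2*(m.+1*M))); last by [].
  move: hq1; set q := (_ %/ _)%Z; lia.
have eqq : (dotI kk1 w1 %/ T)%Z = (dotI kk1 w2 %/ T)%Z.
  move: eq' hq1 hq2; set q1 := (_ %/ _)%Z; set q2 := (_ %/ _)%Z; lia.
have ed : dotI kk1 w1 = dotI kk1 w2 by rewrite -(divzK d1) -(divzK d2) eqq.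
have hoff : forall j, j != i -> w1 j = w2 j.
  move=> j ji; have [j' ->] : exists j', j = lift i j'.
    by case: (unliftP i j) => [j' ->|eji]; [exists j' | rewrite eji eqxx in ji].
  by have := congr1 (fun f : {ffun 'I_m -> 'I_T} => f (j' : 'I_m)) ef; rewrite !ffunE.
have ei : w1 i = w2 i.
  move: ed; rewrite /dotI (bigD1 i) //= [in RHS](bigD1 i) //=.
  rewrite (eq_bigr (fun j => kint kk1 j * (w2 j : nat)%:Z)); last first.
    by move=> j ji; rewrite hoff.
  move=> /addIr /(mulfI ki) [] e; exact: val_inj.
by apply/ffunP => j; case: (eqVneq j i) => [->|]; [exact: ei | exact: hoff].
Qed.

Lemma card_Bad : (#|Bad| <= (2*M).+1 ^ m.+1 * T ^ m * (2*(m.+1*M)).+1)%N.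
Proof.
rewrite -(card_in_imset phi_inj); apply: leq_trans (max_card _) _.
by rewrite !card_prod !card_ffun !card_ord.
Qed.
End Comb.

Section Link.
Variable R : realType.

Lemma e_small m T (w : {ffun 'I_m.+1 -> 'I_T}) (X : R) : (0 < T)%N ->
  e (omega R w) <= X ->
  exists k : 'rV[int]_m.+1,
    [/\ k != 0, dotZ k (omega R w) \is a Num.int & ((supnorm k)%:R : R) < X + 1].
Proof.
move=> T0 hX.
set S := [set ((supnorm k)%:R : R) | k in [set k | Rset (omega R w) k /\ k <> 0]].
have hS : has_inf S.
  split.
    exists ((supnorm (const_mx T%:Z : 'rV[int]_m.+1))%:R).
    exists (const_mx T%:Z) => //; split.
      rewrite /Rset /dotZ /= /omega.
      apply: rpred_sum => i _; rewrite !mxE -pmulrn mulrCA divff ?mulr1 ?natr_int //.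
      by rewrite pnatr_eq0 -lt0n.
    move/matrixP/(_ ord0 ord0); rewrite !mxE => /eqP; lia.
  by exists 0 => x [k _ <-]; exact: ler0n.
have [s [k [Rk k0] <-] hs] := inf_adherent ltr01 hS.
exists k; split => //; first by apply/eqP.
by apply: lt_le_trans hs _; rewrite lerD2r.
Qed.
End Link.

Section Link2.
Variable R : realType.

Lemma dotZ_dotI m M T (w : {ffun 'I_m.+1 -> 'I_T}) (k : 'rV[int]_m.+1)
  (kk : {ffun 'I_m.+1 -> 'I_(2*M).+1}) :
  (forall i, kint kk i = k ord0 i) ->
  dotZ k (omega R w) = (dotI kk w)%:~R / T%:R.
Proof.
move=> hk; rewrite /dotZ /dotI rmorph_sum mulr_suml; apply: eq_bigr => i _.
by rewrite /omega mxE hk rmorphM /= -pmulrn mulrA.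
Qed.

Lemma Ncount_le m (tau : R) T M : (0 < T)%N ->
  (T%:R : R) `^ ((1 - tau) / (m.+2)%:R) + 1 <= M%:R ->
  (Ncount m.+1 tau T <= #|@Bad m M T|)%N.
Proof.
move=> T0 hM; rewrite /Ncount; apply: subset_leq_card; apply/fintype.subsetP => w.
rewrite !inE => /asboolP hw.
have [k [k0 Rk hk]] := e_small T0 hw.
have hkM : (supnorm k < M)%N by rewrite -(ltr_nat R); apply: lt_le_trans hM.
have hki : forall i, (`|k ord0 i| <= supnorm k)%N.
  by move=> i; rewrite /supnorm; exact: (@leq_bigmax _ (fun j => `|k ord0 j|%N) i).
pose kk : {ffun 'I_m.+1 -> 'I_(2*M).+1} := [ffun i => inord (absz (k ord0 i + M%:Z))].
have ekk : forall i, kint kk i = k ord0 i.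
  move=> i; have h := hki i; rewrite /kint ffunE inordK; last first.
    apply: (@leq_ltn_trans (2*M)) => //; move: h hkM; set x := k ord0 i; lia.
  move: h hkM; set x := k ord0 i; lia.
apply/existsP; exists kk; apply/andP; split.
  case: (pickP (fun i => k ord0 i != 0)) => [i ki|H].
    by apply/existsP; exists i; rewrite ekk.
  case/eqP: k0; apply/matrixP => a b; rewrite mxE (ord1 a).
  by have /negbFE/eqP := H b.
move: Rk; rewrite (dotZ_dotI w ekk) => /intrP[z hz].
apply/dvdzP; exists z; apply: (@intr_inj R).
have TR : (T%:R : R) != 0 by rewrite pnatr_eq0 -lt0n.
by rewrite intrM -pmulrn -hz divfK.
Qed.
End Link2.

Section Anal.
Variable R : realType.

Lemma powRN_cvg0 (r : R) : 0 < r ->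
  ((fun T : nat => (T%:R : R) `^ (- r)) : R^nat) @ \oo --> 0.
Proof.
move=> r0; apply/cvgr0Pnorm_lt => eps eps0.
set B := (eps^-1) `^ (r^-1).
exists (Num.truncn B).+1 => // T /= hT.
have BT : B < T%:R.
  by apply: lt_le_trans (truncnS_gt B) _; rewrite ler_nat.
have B0 : 0 <= B by exact: powR_ge0.
have T0 : 0 < (T%:R : R) by apply: le_lt_trans BT.
rewrite ger0_norm ?powR_ge0 // powRN -[eps]invrK ltf_pV2 ?posrE ?powR_gt0 ?invr_gt0 //.
have -> : eps^-1 = B `^ r.
  by rewrite -powRrM mulVf ?gt_eqF // powRr1 // ltW // invr_gt0.
by apply: gt0_ltr_powR => //; rewrite nnegrE ltW.
Qed.
End Anal.

Lemma pow_bound (R : realType) (X : R) k : 0 <= X ->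
  (2 * X + 5) ^+ k <= 7 ^+ k * (X ^+ k + 1).
Proof.
move=> X0; have Xk0 : 0 <= X ^+ k by exact: exprn_ge0.
case: (leP X 1) => X1.
  apply: (@le_trans _ _ (7 ^+ k)).
    by apply: lerXn2r; rewrite ?nnegrE //; lra.
  by rewrite ler_peMr ?exprn_ge0 //; lra.
apply: (@le_trans _ _ ((7 * X) ^+ k)).
  by apply: lerXn2r; rewrite ?nnegrE //; lra.
by rewrite exprMn ler_wpM2l ?exprn_ge0 //; lra.
Qed.

Unset Implicit Arguments.
Set Strict Implicit.

Theorem mainTheorem4 (R : realType) (n : nat) (hn : (1 <= n)%N)
  (tau : R) (htau : 0 < tau) :
  ((fun T : nat => ((Ncount n tau T)%:R : R) / (T%:R ^+ n)) : R^nat) @ \oo --> 0.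
Proof.
case: n hn => [//|m] _.
set a := (1 - tau) / (m.+2)%:R.
pose C : R := (m.+1)%:R * 7 ^+ m.+2.
apply: (squeeze_cvgr (f := cst 0)
  (h := fun T : nat => C * ((T%:R : R) `^ (- tau) + (T%:R : R) `^ (-1)))); last 2 first.
- by apply/cvgr0Pnorm_lt => e e0; exists 0%N => // x _; rewrite normr0.
- have := cvgMl_tmp (a := C) (cvgD (powRN_cvg0 htau) (powRN_cvg0 (@ltr01 R))).
  by rewrite addr0 mulr0 => h; apply: h; typeclasses eauto.
exists 1%N => // T /= T1.
have TR : 0 < (T%:R : R) by rewrite ltr0n.
apply/andP; split; first by rewrite divr_ge0 // exprn_ge0 // ltW.
set X := (T%:R : R) `^ a.
have X0 : 0 <= X by exact: powR_ge0.
set M := (Num.truncn X).+2.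
have hM : X + 1 <= M%:R.
  rewrite /M -addn1 natrD lerD2r; exact: ltW (truncnS_gt X).
have hM2 : M%:R <= X + 2.
  rewrite /M -addn2 natrD lerD2r truncn_le //.
have hN := leq_trans (Ncount_le T1 hM) (@card_Bad m M T T1).
have hN2 : (Ncount m.+1 tau T <= m.+1 * (2*M).+1 ^ m.+2 * T ^ m)%N.
  apply: leq_trans hN _; rewrite [((2*M).+1 ^ m.+2)%N]expnS.
  set P := ((2*M).+1 ^ m.+1)%N; set Q := (T ^ m)%N; nia.
have e1 : X ^+ m.+2 = (T%:R : R) `^ (- tau) * T%:R.
  rewrite -powR_mulrn // -powRrM /a divfK ?pnatr_eq0 //.
  rewrite addrC powRD ?powRr1 ?ltW //.
  by apply/implyP => _; rewrite gt_eqF.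
have e2 : (T%:R : R) `^ (-1) * T%:R = 1 by rewrite powR_inv1 ?mulVf ?gt_eqF // ltW.
rewrite ler_pdivrMr ?exprn_gt0 // exprS mulrA -[C * _ * T%:R]mulrA mulrDl e2 -e1.
apply: (@le_trans _ _ ((m.+1 * (2*M).+1 ^ m.+2 * T ^ m)%N%:R)); first by rewrite ler_nat.
rewrite natrM natrM !natrX /C.
apply: ler_wpM2r; first by rewrite exprn_ge0 // ltW.
rewrite -mulrA; apply: ler_wpM2l => //.
apply: le_trans (pow_bound m.+2 X0).
apply: lerXn2r; rewrite ?nnegrE //; first by lra.
rewrite -addn1 natrD natrM; lra.
Qed.
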